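(* Let $\mathcal L=(\Sigma,X)$ be a language and $\Lambda$ a fuzzy theory in $\mathcal L$. Then the forgetful functor $\mathscr U_\Lambda:\mathbf{Mod}(\Lambda)\to\mathbf{Fuz}_H$ has a left adjoint $\mathscr F_\Lambda$; i.e. for every $H$-fuzzy set $(M,\mu_M)$ there is a model $\mathscr F_\Lambda(M,\mu_M)$ of $\Lambda$ and an arrow $\eta:(M,\mu_M)\to\mathscr U_\Lambda(\mathscr F_\Lambda(M,\mu_M))$ such that for every model $\mathcal B$ of $\Lambda$ and every arrow $g:(M,\mu_M)\to\mathscr U_\Lambda(\mathcal B)$ there is a unique morphism of $\Sigma$-algebras $\bar g:\mathscr F_\Lambda(M,\mu_M)\to\mathcal B$ with $\mathscr U_\Lambda(\bar g)\circ\eta=g$.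
   Context: $H$ is a frame with bottom $\bot$. An $H$-fuzzy set is a pair $(A,\mu_A)$ of a set $A$ and a function $\mu_A:A\to H$; an arrow $f:(A,\mu_A)\to(B,\mu_B)$ is a function with $\mu_A(x)\le\mu_B(f(x))$; they form $\mathbf{Fuz}_H$. For $n\ge1$, $(A,\mu_A)^n=(A^n,\mu)$ with $\mu(a_1,\dots,a_n)=\bigwedge_i\mu_A(a_i)$. A signature $\Sigma=(O,\mathrm{ar},C)$ consists of a set $O$ of operation symbols with arity $\mathrm{ar}:O\to\{1,2,3,\dots\}$ and a set $C$ of constant symbols. A language is a pair $\mathcal L=(\Sigma,X)$ with $X$ a set of variables. $\mathrm{Terms}(\mathcal L)$ is the smallest set containing $X\sqcup C$ and containing $f(t_1,\dots,t_{\mathrm{ar}(f)})$ whenever $f\in O$ and all $t_i\in\mathrm{Terms}(\mathcal L)$. A formula is either an equation $s\equiv t$ ($s,t$ terms) or a membership proposition $\mathsf E_l(t)$ with $l\in H$ and $t$ a term. A sequent $\Gamma\vdash\psi$ is a pair of a (possibly infinite) set $\Gamma$ of formulas and a formula $\psi$. A fuzzy theory in $\mathcal L$ is a set of sequents. A $\Sigma$-algebra $\mathcal A=((A,\mu_A),\Sigma^{\mathcal A})$ is an $H$-fuzzy set $(A,\mu_A)$ together with, for each $f\in O$, an arrow $f^{\mathcal A}:(A,\mu_A)^{\mathrm{ar}(f)}\to(A,\mu_A)$ of $\mathbf{Fuz}_H$ and, for each $c\in C$, an element $c^{\mathcal A}\in A$. A morphism of $\Sigma$-algebras is an arrow of $\mathbf{Fuz}_H$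 between the carriers preserving all constants and commuting with all operations. An assignment is a function $\iota:X\to A$; evaluation: $x^{\mathcal A,\iota}=\iota(x)$, $c^{\mathcal A,\iota}=c^{\mathcal A}$, $f(t_1,\dots,t_n)^{\mathcal A,\iota}=f^{\mathcal A}(t_1^{\mathcal A,\iota},\dots,t_n^{\mathcal A,\iota})$. $\mathcal A\vDash_\iota s\equiv t$ iff $s^{\mathcal A,\iota}=t^{\mathcal A,\iota}$; $\mathcal A\vDash_\iota\mathsf E_l(t)$ iff $l\le\mu_A(t^{\mathcal A,\iota})$. $\mathcal A$ satisfies $\Gamma\vdash\psi$ if for every assignment $\iota$ with $\mathcal A\vDash_\iota\phi$ for all $\phi\in\Gamma$ one has $\mathcal A\vDash_\iota\psi$. $\mathcal A$ is a model of a theory $\Lambda$ if it satisfies every sequent of $\Lambda$. $\mathbf{Mod}(\Lambda)$ is the full subcategory of the category of $\Sigma$-algebras on the models of $\Lambda$, and $\mathscr U_\Lambda:\mathbf{Mod}(\Lambda)\to\mathbf{Fuz}_H$ is the forgetful functor to carriers. *)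

(* Defs.v *)
From mathcomp Require Import all_boot.
Set Implicit Arguments. Unset Strict Implicit. Unset Printing Implicit Defensive.

Record frame := Frame {
  fcar :> Type;
  fle : fcar -> fcar -> Prop;
  fle_refl : forall x, fle x x;
  fle_trans : forall x y z, fle x y -> fle y z -> fle x z;
  fle_antisym : forall x y, fle x y -> fle y x -> x = y;
  fsup : (fcar -> Prop) -> fcar;
  fsup_ub : forall (S : fcar -> Prop) x, S x -> fle x (fsup S);
  fsup_least : forall (S : fcar -> Prop) y,
      (forall x, S x -> fle x y) -> fle (fsup S) y;
  fmeet : fcar -> fcar -> fcar;
  fmeet_lb1 : forall x y, fle (fmeet x y) x;
  fmeet_lb2 : forall x y, fle (fmeet x y) y;
  fmeet_glb : forall x y z, fle z x -> fle z y -> fle z (fmeet x y);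
  fmeet_sup_distr : forall a (S : fcar -> Prop),
      fmeet a (fsup S) = fsup (fun y => exists2 x, S x & y = fmeet a x)
}.

Definition fbot (H : frame) : H := fsup (fun _ : H => False).

Definition finf (H : frame) (S : H -> Prop) : H :=
  fsup (fun l => forall x, S x -> fle l x).

(* the meet  /\_{i < n} a_i  of a finite family (n >= 1 in use) *)
Definition fbigmeet (H : frame) (n : nat) (a : 'I_n -> H) : H :=
  finf (fun x => exists i, x = a i).

Record fuzzy (H : frame) := Fuzzy {
  fz_car :> Type;
  fz_mu : fz_car -> H
}.

Definition is_arrow (H : frame) (A B : fuzzy H) (f : A -> B) : Prop :=
  forall x, fle (fz_mu x) (fz_mu (f x)).

Definition fz_pow (H : frame) (A : fuzzy H) (n : nat) : fuzzy H :=
  @Fuzzy H ('I_n -> A) (fun a => fbigmeet (fun i => fz_mu (a i))).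

Record signature := Signature {
  sig_op : Type;
  sig_ar : sig_op -> nat;
  sig_ar_pos : forall f, 0 < sig_ar f;
  sig_const : Type
}.

Record language := Language {
  lang_sig : signature;
  lang_var : Type
}.

Inductive term (L : language) : Type :=
| TVar : lang_var L -> term L
| TConst : sig_const (lang_sig L) -> term L
| TApp : forall f : sig_op (lang_sig L), ('I_(sig_ar f) -> term L) -> term L.

Inductive formula (H : frame) (L : language) : Type :=
| FEq : term L -> term L -> formula H L
| FMem : H -> term L -> formula H L.

Record sequent (H : frame) (L : language) := Sequent {
  seq_hyps : formula H L -> Prop;
  seq_concl : formula H L
}.

Definition fuzzy_theory (H : frame) (L : language) := sequent H L -> Prop.

Record algebra (H : frame) (S : signature) := Algebra {
  alg_car : fuzzy H;
  alg_op : forall f : sig_op S, ('I_(sig_ar f) -> alg_car) -> alg_car;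
  alg_op_arrow : forall f : sig_op S,
      @is_arrow H (fz_pow alg_car (sig_ar f)) alg_car (@alg_op f);
  alg_const : sig_const S -> alg_car
}.
Arguments alg_op {H S} a f _.
Arguments alg_const {H S} a c.

Definition is_morphism (H : frame) (S : signature) (A B : algebra H S)
    (h : alg_car A -> alg_car B) : Prop :=
  [/\ is_arrow h,
      (forall c, h (alg_const A c) = alg_const B c) &
      (forall f (a : 'I_(sig_ar f) -> alg_car A),
          h (alg_op A f a) = alg_op B f (fun i => h (a i)))].

Fixpoint eval (H : frame) (L : language) (A : algebra H (lang_sig L))
    (iota : lang_var L -> alg_car A) (t : term L) : alg_car A :=
  match t with
  | TVar x => iota x
  | TConst c => alg_const A c
  | TApp f ts => alg_op A f (fun i => @eval H L A iota (ts i))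
  end.
Arguments eval {H L} A iota t.

Definition sat_formula (H : frame) (L : language) (A : algebra H (lang_sig L))
    (iota : lang_var L -> alg_car A) (phi : formula H L) : Prop :=
  match phi with
  | FEq s t => eval A iota s = eval A iota t
  | FMem l t => fle l (fz_mu (eval A iota t))
  end.
Arguments sat_formula {H L} A iota phi.

Definition sat_sequent (H : frame) (L : language) (A : algebra H (lang_sig L))
    (sq : sequent H L) : Prop :=
  forall iota : lang_var L -> alg_car A,
    (forall phi, seq_hyps sq phi -> sat_formula A iota phi) ->
    sat_formula A iota (seq_concl sq).
Arguments sat_sequent {H L} A sq.

Definition is_model (H : frame) (L : language) (Lam : fuzzy_theory H L)
    (A : algebra H (lang_sig L)) : Prop :=
  forall sq, Lam sq -> sat_sequent A sq.

(* Main.v *)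
Require Import Defs.
From mathcomp Require Import all_boot.
From Stdlib Require Import ClassicalEpsilon FunctionalExtensionality PropExtensionality.

Set Implicit Arguments. Unset Strict Implicit.

Inductive mterm (L : language) (T : Type) : Type :=
| MVar : T -> mterm L T
| MConst : sig_const (lang_sig L) -> mterm L T
| MApp : forall f : sig_op (lang_sig L), ('I_(sig_ar f) -> mterm L T) -> mterm L T.
Arguments MVar {L T} _.
Arguments MConst {L T} _.
Arguments MApp {L T} f _.

Fixpoint subst (L : language) (T : Type) (io : lang_var L -> mterm L T) (t : term L)
  : mterm L T :=
  match t with
  | TVar x => io x
  | TConst c => MConst c
  | TApp f ts => MApp f (fun i => subst io (ts i))
  end.

Definition satE (H : frame) (L : language) (T : Type)
  (E : mterm L T -> mterm L T -> Prop) (D : mterm L T -> H)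
  (io : lang_var L -> mterm L T) (phi : formula H L) : Prop :=
  match phi with
  | FEq s t => E (subst io s) (subst io t)
  | FMem l t => fle l (D (subst io t))
  end.

Record closedP (H : frame) (L : language) (Lam : fuzzy_theory H L) (M : fuzzy H)
  (E : mterm L M -> mterm L M -> Prop) (D : mterm L M -> H) : Prop := {
  c_refl : forall t, E t t;
  c_sym : forall s t, E s t -> E t s;
  c_trans : forall s t u, E s t -> E t u -> E s u;
  c_cong : forall f ts us, (forall i, E (ts i) (us i)) -> E (MApp f ts) (MApp f us);
  c_compat : forall s t, E s t -> fle (D s) (D t);
  c_var : forall m, fle (fz_mu m) (D (MVar m));
  c_app : forall f ts, fle (fbigmeet (fun i => D (ts i))) (D (MApp f ts));
  c_seq : forall sq, Lam sq -> forall io,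
      (forall phi, seq_hyps sq phi -> satE E D io phi) -> satE E D io (seq_concl sq)
}.

Lemma finf_lb (H : frame) (S : H -> Prop) x : S x -> fle (finf S) x.
Proof. move=> Sx; apply: fsup_least => l Hl; exact: Hl. Qed.

Lemma finf_glb (H : frame) (S : H -> Prop) l : (forall x, S x -> fle l x) -> fle l (finf S).
Proof. move=> Hl; exact: fsup_ub. Qed.

Lemma fbigmeet_mono (H : frame) n (a b : 'I_n -> H) :
  (forall i, fle (a i) (b i)) -> fle (fbigmeet a) (fbigmeet b).
Proof.
move=> Hab; apply: finf_glb => x [i ->].
apply: fle_trans (Hab i); apply: finf_lb; by exists i.
Qed.

Definition E0 (H : frame) (L : language) (Lam : fuzzy_theory H L) (M : fuzzy H)
  (s t : mterm L M) : Prop :=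
  forall (E : mterm L M -> mterm L M -> Prop) (D : mterm L M -> H), closedP Lam E D -> E s t.

Definition D0 (H : frame) (L : language) (Lam : fuzzy_theory H L) (M : fuzzy H)
  (t : mterm L M) : H :=
  finf (fun x => exists (E : mterm L M -> mterm L M -> Prop) (D : mterm L M -> H), closedP Lam E D /\ x = D t).

Lemma D0_le (H : frame) (L : language) (Lam : fuzzy_theory H L) (M : fuzzy H) (E : mterm L M -> mterm L M -> Prop) (D : mterm L M -> H) t :
  closedP Lam E D -> fle (D0 Lam t) (D t).
Proof. move=> cl; apply: finf_lb; by exists E, D. Qed.

Lemma closed0 (H : frame) (L : language) (Lam : fuzzy_theory H L) (M : fuzzy H) :
  closedP Lam (@E0 H L Lam M) (@D0 H L Lam M).
Proof.
split.
- by move=> t E D cl; apply: c_refl cl _.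
- by move=> s t h E D cl; apply: c_sym cl _ _ (h E D cl).
- by move=> s t u h1 h2 E D cl; apply: c_trans cl _ _ _ (h1 E D cl) (h2 E D cl).
- by move=> f ts us h E D cl; apply: c_cong cl _ _ _ (fun i => h i E D cl).
- move=> s t h; apply: finf_glb => x [E [D [cl ->]]].
  apply: (fle_trans _ (c_compat cl (h E D cl))); exact: D0_le cl.
- move=> m; apply: finf_glb => x [E [D [cl ->]]]; exact: c_var cl m.
- move=> f ts; apply: finf_glb => x [E [D [cl ->]]].
  apply: (fle_trans _ (c_app cl ts)); apply: fbigmeet_mono => i; exact: D0_le cl.
- move=> sq Lsq io hyp.
  have hypcl : forall E D, closedP Lam E D -> satE E D io (seq_concl sq).
    move=> E D cl. apply: (c_seq cl Lsq). move=> phi hphi. move: (hyp phi hphi).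
    case: phi {hphi} => [s t|l t] /=; first by move=> h; exact: h E D cl.
    move=> h; apply: (fle_trans h); exact: D0_le cl.
  case: (seq_concl sq) hypcl => [s t|l t] /= hc.
    by move=> E D cl; apply: (hc E D cl).
  apply: finf_glb => x [E [D [cl ->]]]; exact: hc E D cl.
Qed.

Definition Qcar (H : frame) (L : language) (Lam : fuzzy_theory H L) (M : fuzzy H) :=
  {P : mterm L M -> Prop | exists t, P = E0 Lam t}.
Arguments Qcar {H L} Lam M.

Definition cls (H : frame) (L : language) (Lam : fuzzy_theory H L) (M : fuzzy H)
  (t : mterm L M) : Qcar Lam M := exist _ (E0 Lam t) (ex_intro _ t erefl).

Definition rep (H : frame) (L : language) (Lam : fuzzy_theory H L) (M : fuzzy H)
  (c : Qcar Lam M) : mterm L M := proj1_sig (constructive_indefinite_description _ (proj2_sig c)).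

Lemma cls_rep (H : frame) (L : language) (Lam : fuzzy_theory H L) (M : fuzzy H)
  (c : Qcar Lam M) : cls Lam (rep c) = c.
Proof.
case: c => P pf; rewrite /rep /=.
case: (constructive_indefinite_description _ pf) => t ht /=.
rewrite /cls; move: pf; rewrite ht => pf.
by rewrite (proof_irrelevance _ pf (ex_intro _ t erefl)).
Qed.

Lemma cls_eq (H : frame) (L : language) (Lam : fuzzy_theory H L) (M : fuzzy H)
  (s t : mterm L M) : cls Lam s = cls Lam t <-> E0 Lam s t.
Proof.
have cl := @closed0 H L Lam M.
split.
- move=> e; have: proj1_sig (cls Lam s) t by rewrite e; exact: (c_refl cl t).
  by [].
- move=> st; apply: eq_sig_hprop => [P|]; first by move=> *; apply: proof_irrelevance.
  rewrite /=.
  apply: functional_extensionality => u; apply: propositional_extensionality; split.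
    move=> hu; apply: (c_trans cl _ hu); exact: (c_sym cl st).
  by move=> hu; apply: (c_trans cl st hu).
Qed.

Lemma rep_cls (H : frame) (L : language) (Lam : fuzzy_theory H L) (M : fuzzy H)
  (t : mterm L M) : E0 Lam (rep (cls Lam t)) t.
Proof. by apply/cls_eq; rewrite cls_rep. Qed.

Lemma D0_compat (H : frame) (L : language) (Lam : fuzzy_theory H L) (M : fuzzy H)
  (s t : mterm L M) : E0 Lam s t -> D0 Lam s = D0 Lam t.
Proof.
have cl := @closed0 H L Lam M.
move=> st; apply: fle_antisym; first exact: (c_compat cl st).
exact: (c_compat cl (c_sym cl st)).
Qed.

Definition Ffz (H : frame) (L : language) (Lam : fuzzy_theory H L) (M : fuzzy H) : fuzzy H :=
  @Fuzzy H (Qcar Lam M) (fun c => D0 Lam (rep c)).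

Definition Fop (H : frame) (L : language) (Lam : fuzzy_theory H L) (M : fuzzy H)
  (f : sig_op (lang_sig L)) (a : 'I_(sig_ar f) -> Qcar Lam M) : Qcar Lam M :=
  cls Lam (MApp f (fun i => rep (a i))).

Lemma Fop_arrow (H : frame) (L : language) (Lam : fuzzy_theory H L) (M : fuzzy H)
  (f : sig_op (lang_sig L)) :
  @is_arrow H (fz_pow (Ffz Lam M) (sig_ar f)) (Ffz Lam M) (@Fop H L Lam M f).
Proof.
have cl := @closed0 H L Lam M.
move=> a /=; rewrite /Fop (D0_compat (@rep_cls H L Lam M _)).
exact: (c_app cl (fun i => rep (a i))).
Qed.

Definition Falg (H : frame) (L : language) (Lam : fuzzy_theory H L) (M : fuzzy H)
  : algebra H (lang_sig L) :=
  @Algebra H (lang_sig L) (Ffz Lam M) (@Fop H L Lam M) (@Fop_arrow H L Lam M)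
    (fun c => cls Lam (MConst c)).

Lemma eval_F (H : frame) (L : language) (Lam : fuzzy_theory H L) (M : fuzzy H)
  (io : lang_var L -> Qcar Lam M) (t : term L) :
  eval (Falg Lam M) io t = cls Lam (subst (fun x => rep (io x)) t).
Proof.
have cl := @closed0 H L Lam M.
elim: t => [x|c|f ts IH] /=.
- by rewrite cls_rep.
- by [].
- rewrite /Fop; apply/cls_eq; apply: (c_cong cl) => i.
  rewrite IH; exact: rep_cls.
Qed.

Fixpoint hB (H : frame) (L : language) (M : fuzzy H) (B : algebra H (lang_sig L))
  (g : M -> alg_car B) (t : mterm L M) : alg_car B :=
  match t with
  | MVar m => g m
  | MConst c => alg_const B c
  | MApp f ts => alg_op B f (fun i => hB g (ts i))
  end.

Lemma eval_B (H : frame) (L : language) (M : fuzzy H) (B : algebra H (lang_sig L))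
  (g : M -> alg_car B) (io : lang_var L -> mterm L M) (t : term L) :
  eval B (fun x => hB g (io x)) t = hB g (subst io t).
Proof.
elim: t => [x|c|f ts IH] //=.
by congr (alg_op B f _); apply: functional_extensionality => i; rewrite IH.
Qed.

Lemma closedB (H : frame) (L : language) (Lam : fuzzy_theory H L) (M : fuzzy H)
  (B : algebra H (lang_sig L)) (g : M -> alg_car B) :
  is_model Lam B -> is_arrow g ->
  closedP Lam (fun s t => hB g s = hB g t) (fun t => fz_mu (hB g t)).
Proof.
move=> mB ag; split => //=.
- by move=> s t u /= -> ->.
- by move=> f ts us /= h; congr (alg_op B f _); apply: functional_extensionality => i; rewrite h.
- by move=> s t /= ->; apply: fle_refl.
- move=> f ts; exact: (@alg_op_arrow H _ B f (fun i => hB g (ts i))).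
- move=> sq Lsq io hyp.
  have := mB sq Lsq (fun x => hB g (io x)).
  have key : forall phi, sat_formula B (fun x => hB g (io x)) phi <->
                    satE (fun s t => hB g s = hB g t) (fun t => fz_mu (hB g t)) io phi.
    by case=> [s t|l t] /=; rewrite !eval_B.
  move=> h; apply/key; apply: h => phi hphi; apply/key; exact: hyp.
Qed.

Theorem theorem33 (H : frame) (L : language) (Lam : fuzzy_theory H L)
    (M : fuzzy H) :
  exists (F : algebra H (lang_sig L)) (eta : M -> alg_car F),
    [/\ is_model Lam F,
        is_arrow eta &
        forall (B : algebra H (lang_sig L)), is_model Lam B ->
        forall g : M -> alg_car B, is_arrow g ->
        exists! gbar : alg_car F -> alg_car B,
          is_morphism gbar /\ (forall m, gbar (eta m) = g m)].
Proof.
have cl := @closed0 H L Lam M.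
exists (Falg Lam M), (fun m => cls Lam (MVar m)); split.
- move=> sq Lsq io hyp.
  have key : forall phi, sat_formula (Falg Lam M) io phi <->
      satE (@E0 H L Lam M) (@D0 H L Lam M) (fun x => rep (io x)) phi.
    case=> [s t|l t] /=.
      rewrite !eval_F; exact: cls_eq.
    by rewrite eval_F (D0_compat (@rep_cls H L Lam M _)).
  apply/key; apply: (c_seq cl Lsq) => phi hphi; apply/key; exact: hyp.
- move=> m /=; rewrite (D0_compat (@rep_cls H L Lam M _)); exact: (c_var cl m).
- move=> B mB g ag.
  have clB := closedB mB ag.
  exists (fun c => hB g (rep c)); split.
    split; first split.
    + move=> c /=; exact: (D0_le _ clB).
    + move=> c /=; exact: (@rep_cls H L Lam M (MConst c) _ _ clB).
    + move=> f a /=; exact: (@rep_cls H L Lam M _ _ _ clB).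
    + move=> m /=; exact: (@rep_cls H L Lam M (MVar m) _ _ clB).
  move=> g' [[_ hc ho] he].
  suff key : forall t, g' (cls Lam t) = hB g t.
    apply: functional_extensionality => c.
    by have := key (rep c); rewrite cls_rep => ->.
  elim=> [m|c|f ts IH] /=.
  + exact: he.
  + exact: hc.
  + have -> : cls Lam (MApp f ts) = alg_op (Falg Lam M) f (fun i => cls Lam (ts i)).
      apply/cls_eq; apply: (c_cong cl) => i; apply: (c_sym cl); exact: rep_cls.
    rewrite ho; congr (alg_op B f _); apply: functional_extensionality => i; exact: IH.
Qed.
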